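(* Consider the repeated Prisoner's Dilemma with $A_1=A_2=\{C,D\}$. Let $k$ be a natural number, let $k_0$ be the largest integer with $k_0^2+k_0\le k$, and let $k_1,k_2,k_3$ be positive integers with $k_1+k_2+k_3=k_0$. Let $\omega_0=k_1\times(D,D)+k_2\times(D,C)+k_3\times(C,C)$ and \[\omega^*=k^3\times(D,D)+\sum_{n=1}^{k}\big(k\times(C,C)+k\times(D,D)\big)+(k+1)\times(C,C)+\sum_{n=1}^{\infty}\omega_0 .\] Then the complexity of $\omega^*$ with respect to player 1 is $k^3+2k^2+1$, and the complexity of $\omega^*$ with respect to player 2 is $k^3+2k^2+k+1$.
   Context: Action pairs are written (action of player 1, action of player 2). The notation $n\times a$ denotes $n$ consecutive repetitions of the action pair $a$, and $+$ (and $\sum$) denotes concatenation of sequences of action pairs; $\sum_{n=1}^\infty\omega_0$ is the infinite periodic repetition of $\omega_0$. A pure automaton of player $i$ is a finite state machine $(Q,f,g,q^* )$ with output function $f:Q\to A_i$, transition function $g:Q\times A_{3-i}\to Q$ and initial state $q^*$: at stage $t$ in state $q^t$ it plays $f(q^t)$ and moves to $g(q^t,a_{3-i}^t)$, where $a_{3-i}^t$ is the other player's action at stage $t$; its size is $|Q|$. An automaton of player $i$ is compatible with a (finite or infinite) sequence of action pairs $\omega$ if, when player $3-i$ plays her coordinates of $\omega$ stage by stage, the automaton outputs player $i$'s coordinates of $\omega$ at every stage. The complexity of $\omega$ with respect to player $i$ is the size of the smallest automaton of player $i$ compatible with $\omega$. *)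

(* Defs.v *)
From HB Require Import structures.
From mathcomp Require Import all_boot.
Set Implicit Arguments. Unset Strict Implicit. Unset Printing Implicit Defensive.

Inductive act := C | D.

Definition act_eqb (a b : act) : bool :=
  match a, b with C, C | D, D => true | _, _ => false end.
Lemma act_eqP : Equality.axiom act_eqb.
Proof. by case; case; constructor. Qed.
HB.instance Definition _ := hasDecEq.Build act act_eqP.

Definition apair := (act * act)%type.

Inductive player := P1 | P2.

Definition own (i : player) (a : apair) : act :=
  match i with P1 => a.1 | P2 => a.2 end.
Definition other (i : player) (a : apair) : act :=
  match i with P1 => a.2 | P2 => a.1 end.

Record automaton := Automaton {
  aQ : finType;
  aout : aQ -> act;
  atrans : aQ -> act -> aQ;    (* g : Q x A_{3-i} -> Q *)
  ainit : aQ
}.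

Definition asize (M : automaton) : nat := #|aQ M|.

Fixpoint astate (i : player) (M : automaton) (omega : nat -> apair) (t : nat)
  : aQ M :=
  match t with
  | 0 => ainit M
  | t'.+1 => atrans (astate i M omega t') (other i (omega t'))
  end.

Definition compatible (i : player) (M : automaton) (omega : nat -> apair) : Prop :=
  forall t, aout (astate i M omega t) = own i (omega t).

Definition complexity_is (i : player) (omega : nat -> apair) (n : nat) : Prop :=
  (exists M, compatible i M omega /\ asize M = n) /\
  (forall M, compatible i M omega -> n <= asize M).

Definition rep (n : nat) (a : apair) : seq apair := nseq n a.

Definition omega0 (k1 k2 k3 : nat) : seq apair :=
  rep k1 (D, D) ++ rep k2 (D, C) ++ rep k3 (C, C).

Definition star_prefix (k : nat) : seq apair :=
  rep (k ^ 3) (D, D)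
  ++ flatten (nseq k (rep k (C, C) ++ rep k (D, D)))
  ++ rep k.+1 (C, C).

(* p followed by the infinite periodic repetition of w (w nonempty) *)
Definition then_periodic (p w : seq apair) (t : nat) : apair :=
  if t < size p then nth (D, D) p t
  else nth (D, D) w ((t - size p) %% size w).

Definition omega_star (k k1 k2 k3 : nat) : nat -> apair :=
  then_periodic (star_prefix k) (omega0 k1 k2 k3).

(* Main.v *)
Require Import Defs.
From mathcomp Require Import all_boot zify.
From Stdlib Require Import Classical FunctionalExtensionality.
Set Implicit Arguments. Unset Strict Implicit. Unset Printing Implicit Defensive.

Definition NN (k : nat) := k ^ 3 + 2 * k ^ 2 + k + 1.

Definition om (k k1 k2 k3 t : nat) : apair :=
  if t < k ^ 3 then (D, D)
  else if t < k ^ 3 + 2 * k ^ 2 then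
    (if (t - k ^ 3) %% (2 * k) < k then (C, C) else (D, D))
  else if t < NN k then (C, C)
  else let i := (t - NN k) %% (k1 + k2 + k3) in
    if i < k1 then (D, D) else if i < k1 + k2 then (D, C) else (C, C).

Lemma nth_flatten_nseq (x0 : apair) n (s : seq apair) i :
  i < n * size s -> nth x0 (flatten (nseq n s)) i = nth x0 s (i %% size s).
Proof.
elim: n i => [|n IH] i //=.
rewrite nth_cat mulSn => Hi.
case: ltnP => H1; first by rewrite modn_small.
rewrite IH; last by lia.
by rewrite -[in RHS](subnKC H1) modnDl.
Qed.

Lemma size_flatten_nseq n (s : seq apair) : size (flatten (nseq n s)) = n * size s.
Proof. by elim: n => //= n IH; rewrite size_cat IH mulSn. Qed.

Lemma size_prefix k : size (star_prefix k) = NN k.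
Proof.
rewrite /star_prefix !size_cat size_flatten_nseq !size_cat /rep !size_nseq /NN.
rewrite expnS (expnS k 1) expn1. lia.
Qed.

Lemma omega_star_om k k1 k2 k3 t : 0 < k -> 0 < k1 + k2 + k3 ->
  omega_star k k1 k2 k3 t = om k k1 k2 k3 t.
Proof.
move=> k0 kp.
rewrite /omega_star /then_periodic size_prefix /om.
have sz0 : size (omega0 k1 k2 k3) = k1 + k2 + k3.
  by rewrite /omega0 !size_cat /rep !size_nseq addnA.
case: (ltnP t (k ^ 3)) => H1.
  have -> : t < NN k by rewrite /NN; lia.
  by rewrite /star_prefix nth_cat /rep size_nseq H1 nth_nseq H1.
case: (ltnP t (k ^ 3 + 2 * k ^ 2)) => H2.
  have -> : t < NN k by rewrite /NN; lia.
  rewrite /star_prefix nth_cat /rep size_nseq ltnNge H1 /=.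
  rewrite nth_cat size_flatten_nseq !size_cat !size_nseq.
  have Hs : t - k ^ 3 < k * (k + k) by rewrite (expnS k 1) expn1 in H2; lia.
  rewrite Hs nth_flatten_nseq ?size_cat ?size_nseq //.
  rewrite nth_cat size_nseq nth_nseq.
  have -> : k + k = 2 * k by lia.
  case: ifP => H3; first by rewrite H3.
  by rewrite nth_nseq; case: ifP.
case: (ltnP t (NN k)) => H3.
  rewrite /star_prefix nth_cat /rep size_nseq ltnNge H1 /=.
  rewrite nth_cat size_flatten_nseq !size_cat !size_nseq.
  have -> : (t - k ^ 3 < k * (k + k)) = false by rewrite (expnS k 1) expn1 in H2; lia.
  rewrite (_ : (C,C) :: nseq k (C,C) = nseq k.+1 (C,C)) // nth_nseq.
  rewrite /NN in H3. rewrite (expnS k 1) expn1 in H2 H3.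
  by have -> : t - k ^ 3 - k * (k + k) < k.+1 by lia.
rewrite sz0.
have Hi := ltn_mod (t - NN k) (k1 + k2 + k3). rewrite kp in Hi.
rewrite /omega0 nth_cat /rep size_nseq nth_nseq.
set i := (t - NN k) %% (k1 + k2 + k3).
case: ifP => H5; first by case: ifP.
rewrite nth_cat size_nseq !nth_nseq.
rewrite (_ : (i < k1 + k2) = (i - k1 < k2)); last by lia.
case: ifP => H6; first by rewrite H6.
by rewrite ifT //; lia.
Qed.

Lemma sq k : k ^ 2 = k * k. Proof. by rewrite expnS expn1. Qed.

Lemma mid_bound k q r : q < k -> r < 2 * k -> q * (2 * k) + r < 2 * k ^ 2.
Proof. rewrite sq => h1 h2. nia. Qed.

Lemma om_lt k k1 k2 k3 t : t < k ^ 3 -> om k k1 k2 k3 t = (D, D).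
Proof. by rewrite /om => ->. Qed.

Lemma om_mid k k1 k2 k3 q r : q < k -> r < 2 * k ->
  om k k1 k2 k3 (k ^ 3 + q * (2 * k) + r) = if r < k then (C, C) else (D, D).
Proof.
move=> hq hr; have hb := mid_bound hq hr.
rewrite /om ifF; last by lia.
rewrite ifT; last by lia.
by rewrite -addnA addKn modnMDl modn_small.
Qed.

Lemma om_fin k k1 k2 k3 t : k ^ 3 + 2 * k ^ 2 <= t < NN k ->
  om k k1 k2 k3 t = (C, C).
Proof. move=> /andP[h1 h2]; rewrite /om ifF; [rewrite ifF; [by rewrite h2|lia]|lia]. Qed.

Definition w0 k1 k2 (i : nat) : apair :=
  if i < k1 then (D, D) else if i < k1 + k2 then (D, C) else (C, C).

Lemma om_per k k1 k2 k3 q i : i < k1 + k2 + k3 ->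
  om k k1 k2 k3 (NN k + q * (k1 + k2 + k3) + i) = w0 k1 k2 i.
Proof.
move=> hi; rewrite /om ifF; last by rewrite /NN; lia.
rewrite ifF; last by rewrite /NN; lia.
rewrite ifF; last by lia.
by rewrite -addnA addKn modnMDl modn_small.
Qed.

Lemma mid_dec k t : k ^ 3 <= t < k ^ 3 + 2 * k ^ 2 ->
  exists q r, [/\ q < k, r < 2 * k & t = k ^ 3 + q * (2 * k) + r].
Proof.
move=> /andP[h1 h2].
have kp : 0 < k by case: k h2 h1 => //=; rewrite !expnS; lia.
exists ((t - k^3) %/ (2 * k)), ((t - k^3) %% (2 * k)); split.
- rewrite ltn_divLR; last by lia. rewrite sq in h2; nia.
- rewrite ltn_mod; lia.
- by rewrite -addnA -divn_eq subnKC.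
Qed.

Lemma per_dec k k0 t : 0 < k0 -> NN k <= t ->
  exists q i, i < k0 /\ t = NN k + q * k0 + i.
Proof.
move=> k0p h; exists ((t - NN k) %/ k0), ((t - NN k) %% k0); split.
- by rewrite ltn_mod.
- by rewrite -addnA -divn_eq subnKC.
Qed.

Section Facts.
Variables k k1 k2 k3 : nat.
Hypotheses (h1 : 0 < k1) (h2 : 0 < k2) (h3 : 0 < k3) (hk : k1 + k2 + k3 <= k).
Local Notation om := (om k k1 k2 k3).
Local Notation N := (NN k).

Lemma kpos : 0 < k. Proof. lia. Qed.

Lemma om_cases t :
  (t < N /\ (om t = (C, C) \/ om t = (D, D))) \/
  (N <= t /\ exists i, i < k1 + k2 + k3 /\ om t = w0 k1 k2 i).
Proof.
case: (ltnP t N) => ht.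
  left; split => //.
  case: (ltnP t (k ^ 3)) => ha; first by right; rewrite om_lt.
  case: (ltnP t (k ^ 3 + 2 * k ^ 2)) => hb.
    have [q [r [hq hr ->]]] := mid_dec (k := k) (t := t) (introT andP (conj ha hb)).
    by rewrite om_mid //; case: ifP; auto.
  by left; rewrite om_fin // hb ht.
right; split => //.
have [q [i [hi ->]]] := per_dec (k := k) (k0 := k1 + k2 + k3) (t := t) ltac:(lia) ht.
by exists i; rewrite om_per.
Qed.

Lemma omP t : t < N -> (om t).1 = (om t).2.
Proof. by case: (om_cases t) => [[_ [->|->]]|[h _]] //; lia. Qed.

Lemma omQ t : om t <> (C, D).
Proof.
case: (om_cases t) => [[_ [->|->]]|[_ [i [_ ->]]]] //.
by rewrite /w0; case: ifP => //; case: ifP.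
Qed.

Lemma omR t : om t = (D, C) -> N <= t.
Proof. by case: (om_cases t) => [[_ [->|->]]|[h _]]. Qed.

Lemma omW u : N - k - 1 <= u < N -> om u = (C, C).
Proof. move=> /andP[a b]; apply: om_fin; rewrite b /NN in a *; lia. Qed.

Lemma omPer m : m < k1 -> om (N + m) = (D, D).
Proof.
move=> hm; have := @om_per k k1 k2 k3 0 m ltac:(lia).
by rewrite mul0n addn0 /w0 hm.
Qed.

Lemma omPer1 : om (N + k1) = (D, C).
Proof.
have := @om_per k k1 k2 k3 0 k1 ltac:(lia).
by rewrite mul0n addn0 /w0 ltnn ifT //; lia.
Qed.

Lemma omF1 a : a + k <= N - 2 -> exists u, a <= u <= a + k /\ (om u).1 = D.
Proof.
move=> ha.
case: (ltnP a (k ^ 3)) => h0; first by exists a; rewrite om_lt // leqnn leq_addr.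
have [q [r [hq hr ea]]] := mid_dec (k := k) (t := a) ltac:(rewrite /NN in ha; lia).
case: (ltnP r k) => hrk.
  exists (k ^ 3 + q * (2 * k) + k); split; first by lia.
  by rewrite om_mid //; [rewrite ifF //; lia | lia].
by exists a; rewrite ea om_mid // ltnNge hrk /= leqnn leq_addr.
Qed.

Lemma omF2 d : 0 < d -> exists u, N - k - 1 <= u < N /\ om (u + d) = (D, D).
Proof.
move=> hd; set k0 := k1 + k2 + k3.
have k0p : 0 < k0 by lia.
have hm := ltn_mod (d - 1) k0; rewrite k0p in hm.
exists (N - 1 - (d - 1) %% k0); split.
  rewrite /NN in hm *; lia.
have e := divn_eq (d - 1) k0.
have -> : N - 1 - (d - 1) %% k0 + d = N + (d - 1) %/ k0 * k0 + 0.
  rewrite /NN in hm *; lia.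
by rewrite om_per /w0 // h1.
Qed.

Lemma omG p : 0 < p -> p < N -> om (p - 1) = (C, C) -> om p = (D, D) ->
  forall m, m < k -> om (p + m) = (D, D).
Proof.
move=> p0 pN e1 e2 m hm.
case: (ltnP (p - 1) (k ^ 3)) => ha; first by rewrite om_lt in e1.
case: (ltnP p (k ^ 3 + 2 * k ^ 2)) => hb; last first.
  by rewrite om_fin ?hb ?pN in e2.
have [q [r [hq hr ep]]] := mid_dec (k := k) (t := p - 1) ltac:(lia).
rewrite ep om_mid // in e1.
case: ifP e1 => // hrk _.
have er : r = k - 1.
  case: (ltnP (r + 1) k) => hr1.
    have : om p = om (k ^ 3 + q * (2 * k) + (r + 1)) by congr om; lia.
    by rewrite e2 om_mid ?hr1 //; lia.
  lia.
have -> : p + m = k ^ 3 + q * (2 * k) + (k + m) by lia.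
rewrite om_mid //; last by lia.
by rewrite ifF //; lia.
Qed.

End Facts.

Lemma prop_states (i : player) (M : automaton) (w : nat -> apair) s t n :
  astate i M w s = astate i M w t ->
  (forall j, j < n -> w (s + j) = w (t + j)) ->
  astate i M w (s + n) = astate i M w (t + n).
Proof.
move=> e; elim: n => [|n IH] H; first by rewrite !addn0.
rewrite !addnS /= IH; last by move=> j hj; apply: H; lia.
by rewrite H.
Qed.

Lemma lower (i : player) (w : nat -> apair) (Mn : nat) (M : automaton) :
  compatible i M w ->
  (forall s t, s < t -> t < Mn -> exists n,
     (forall j, j < n -> w (s + j) = w (t + j)) /\ own i (w (s + n)) <> own i (w (t + n))) ->
  Mn <= asize M.
Proof.
move=> cM H.
have key : forall s t, s < t -> t < Mn -> astate i M w s <> astate i M w t.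
  move=> s t st tM e.
  have [n [hn hne]] := H s t st tM.
  apply: hne; rewrite -!cM; congr aout; exact: prop_states.
pose f (x : 'I_Mn) := astate i M w x.
have inj : injective f.
  move=> x y e; apply: val_inj => /=.
  case: (ltngtP x y) => // hxy.
  - by case: (key _ _ hxy (ltn_ord y) e).
  - by case: (key _ _ hxy (ltn_ord x) (esym e)).
by have := leq_card f inj; rewrite card_ord.
Qed.

Lemma upper (i : player) (w : nat -> apair) (n : nat) (sig : nat -> nat)
  (out : nat -> act) (tr : nat -> act -> nat) :
  sig 0 = 0 -> (forall t, sig t < n.+1) ->
  (forall t, out (sig t) = own i (w t)) ->
  (forall t, tr (sig t) (other i (w t)) = sig t.+1) ->
  exists M, compatible i M w /\ asize M = n.+1.
Proof.
move=> s0 sb so st.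
pose M := @Automaton ('I_n.+1 : finType) (fun q => out q)
  (fun q a => inord (tr q a)) ord0.
have hs : forall t, val (astate i M w t) = sig t.
  elim=> [|t IH] /=; first by rewrite s0.
  by rewrite IH st inordK // -ltnS.
exists M; split; last by rewrite /asize card_ord.
by move=> t; rewrite /= hs so.
Qed.

Section Main.
Variables k k1 k2 k3 : nat.
Hypotheses (h1 : 0 < k1) (h2 : 0 < k2) (h3 : 0 < k3) (hk : k1 + k2 + k3 <= k).
Local Notation om := (om k k1 k2 k3).
Local Notation N := (NN k).

Lemma gen_sep (i : player) s t : s < t -> t <= N - k - 1 ->
  exists n, (forall j, j < n -> om (s + j) = om (t + j)) /\
            own i (om (s + n)) <> own i (om (t + n)).
Proof.
move=> st tN.
have [u [/andP[hu1 hu2] hud]] := omF2 h1 h2 h3 hk (d := t - s) ltac:(lia).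
have exP : exists n, om (s + n) != om (t + n).
  exists (u - s).
  rewrite (_ : s + (u - s) = u); last by lia.
  rewrite (_ : t + (u - s) = u + (t - s)); last by lia.
  by rewrite hud (omW h1 h2 h3 hk) // hu1 hu2.
case: (ex_minnP exP) => n0 /eqP Pn0 minn0.
have agree : forall j, j < n0 -> om (s + j) = om (t + j).
  move=> j hj; apply/eqP; apply: contraLR hj => hj.
  by rewrite -leqNgt; apply: minn0.
have n0u : n0 <= u - s.
  apply: minn0.
  rewrite (_ : s + (u - s) = u); last by lia.
  rewrite (_ : t + (u - s) = u + (t - s)); last by lia.
  by rewrite hud (omW h1 h2 h3 hk) // hu1 hu2.
exists n0; split => // eown.
have dg := omP h1 h2 h3 hk (t := s + n0) ltac:(lia).
have eDC : om (t + n0) = (D, C).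
  have nq := omQ h1 h2 h3 hk (t := t + n0).
  move: Pn0 eown dg nq.
  case: (om (s + n0)) => [a b]; case: (om (t + n0)) => [c e].
  by case: i; case: a; case: b; case: c; case: e.
have tn0 := omR h1 h2 h3 hk eDC.
have [u' [/andP[hu'1 hu'2] hu'D]] := omF1 h1 h2 h3 hk (a := N - k - 1 - (t - s)) ltac:(lia).
have := agree (u' - s) ltac:(lia).
rewrite (_ : s + (u' - s) = u'); last by lia.
rewrite (omW h1 h2 h3 hk (u := t + (u' - s))); last by apply/andP; lia.
by move=> e; rewrite e in hu'D.
Qed.

Lemma p2_sep s t : s < t -> N - k <= t -> t < N ->
  exists n, (forall j, j < n -> om (s + j) = om (t + j)) /\
            own P2 (om (s + n)) <> own P2 (om (t + n)).
Proof.
move=> st t1 t2.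
have omW' := omW h1 h2 h3 hk.
case: (leqP (N - k - 1) s) => hs.
  exists (N - t); split.
    move=> j hj; rewrite !omW' //; apply/andP; lia.
  rewrite omW'; last by apply/andP; lia.
  rewrite (_ : t + (N - t) = N + 0); last by lia.
  by rewrite (omPer h1 h2 h3 hk).
set r := N - t.
have er : t + r = N + 0 by rewrite /r; lia.
case: (classic (exists j, (j <= r) && (om (s + j) != om (t + j)))) => [exP|nex].
  case: (ex_minnP exP) => n0 /andP[n0r /eqP Pn0] minn0.
  exists n0; split.
    move=> j hj0; apply/eqP; apply/negPn/negP => hj; have hh := minn0 j.
    rewrite hj andbT in hh; have := hh ltac:(lia); lia.
  have d1 := omP h1 h2 h3 hk (t := s + n0) ltac:(lia).
  have d2 : (om (t + n0)).1 = (om (t + n0)).2.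
    case: (ltnP (t + n0) N) => hh; first exact: omP.
    by rewrite (_ : t + n0 = N + 0) ?(omPer h1 h2 h3 hk) //; lia.
  move: Pn0 d1 d2 => /=.
  by case: (om (s + n0)) => [a b]; case: (om (t + n0)) => [c e] /=; case: a; case: b; case: c; case: e.
have agree : forall j, j <= r -> om (s + j) = om (t + j).
  move=> j hj; apply/eqP; apply/negPn/negP => hne; apply: nex; exists j; by rewrite hj hne.
have G := omG h1 h2 h3 hk (p := s + r) ltac:(lia) ltac:(lia).
have G1 : om (s + r - 1) = (C, C).
  rewrite (_ : s + r - 1 = s + (r - 1)); last by lia.
  rewrite agree; last by lia.
  by rewrite omW' //; apply/andP; rewrite /r; lia.
have G2 : om (s + r) = (D, D) by rewrite agree // er (omPer h1 h2 h3 hk).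
have G' := G G1 G2.
exists (r + k1); split.
  move=> j hj; case: (leqP j r) => hjr; first exact: agree.
  rewrite (_ : s + j = s + r + (j - r)); last by lia.
  rewrite (_ : t + j = N + (j - r)); last by lia.
  rewrite G'; last by lia.
  by rewrite (omPer h1 h2 h3 hk) //; lia.
rewrite addnA G'; last by lia.
by rewrite addnA er addn0 (omPer1 h1 h2 h3 hk).
Qed.

End Main.

Definition Bk k := k ^ 3 + (k - 1) * (2 * k).

Section Up.
Variables k k1 k2 k3 : nat.
Hypotheses (h1 : 0 < k1) (h2 : 0 < k2) (h3 : 0 < k3) (hk : k1 + k2 + k3 <= k).
Local Notation om := (om k k1 k2 k3).
Local Notation N := (NN k).
Local Notation B := (Bk k).
Local Notation k0 := (k1 + k2 + k3).

Lemma BkE : k ^ 3 + 2 * k ^ 2 = B + 2 * k.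
Proof. rewrite /Bk sq. have : 0 < k by lia. nia. Qed.

Lemma NNE : N = B + 3 * k + 1.
Proof. rewrite /NN. have := BkE. lia. Qed.

Lemma om_B m : m < 2 * k -> om (B + m) = if m < k then (C, C) else (D, D).
Proof. move=> hm; rewrite /Bk om_mid //; lia. Qed.

Lemma om_B' m : m < 2 * k -> om (B - 2 * k + m) = if m < k then (C, C) else (D, D).
Proof.
move=> hm; rewrite (_ : B - 2 * k = k ^ 3 + (k - 2) * (2 * k)).
  rewrite om_mid //; lia.
rewrite /Bk. have : 2 < k by lia. nia.
Qed.

Lemma om_Bab a b : a + b < 2 * k -> om (B + a + b) = if a + b < k then (C, C) else (D, D).
Proof. by move=> h; rewrite -[B + a + b]addnA om_B. Qed.

Definition idx t := (t - N) %% k0.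

Lemma per_idx q i : i < k0 -> idx (N + q * k0 + i) = i.
Proof. by move=> hi; rewrite /idx -addnA addKn modnMDl modn_small. Qed.

Lemma per_succ q i : i < k0 ->
  (N + q * k0 + i).+1 = if i.+1 < k0 then N + q * k0 + i.+1 else N + q.+1 * k0 + 0.
Proof. move=> hi; case: ifP => h; rewrite ?mulSn; lia. Qed.

Lemma per_om q i : i < k0 -> om (N + q * k0 + i) = w0 k1 k2 i.
Proof. exact: om_per. Qed.

Definition sig1 t :=
  if t <= B + 2 * k then t
  else if t < N then B + (t - (B + 2 * k) - 1)
  else if idx t < k1 + k2 then B + k + idx t else B + k - k0 + idx t.

Definition out (q : nat) : act := (om q).1.

Definition tr1 q (a : act) :=
  if q == B + 2 * k then B
  else if (q == B + k + k1 + k2 - 1) && (a == C) then B + k - k3 else q.+1.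

Lemma sig1_per q i : i < k0 ->
  sig1 (N + q * k0 + i) = if i < k1 + k2 then B + k + i else B + k - k0 + i.
Proof.
move=> hi; have := NNE => eN.
rewrite /sig1 ifF; last by lia.
by rewrite ifF ?per_idx //; lia.
Qed.

Lemma w0_cases i : i < k0 ->
  [\/ i < k1 /\ w0 k1 k2 i = (D, D),
      k1 <= i < k1 + k2 /\ w0 k1 k2 i = (D, C) |
      k1 + k2 <= i /\ w0 k1 k2 i = (C, C)].
Proof.
move=> hi; rewrite /w0; case: ifP => a; first by constructor 1.
case: ifP => b; [constructor 2 | constructor 3]; split => //; lia.
Qed.

Lemma t_cases t : t < N \/ exists q i, i < k0 /\ t = N + q * k0 + i.
Proof.
case: (ltnP t N) => h; [by left | right].
exact: (@per_dec k (k1 + k2 + k3) t ltac:(lia) h).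
Qed.

Lemma sig1_bound t : sig1 t < (B + 2 * k).+1.
Proof.
have eN := NNE.
case: (t_cases t) => [h | [q [i [hi ->]]]].
  rewrite /sig1; case: ifP => a; first lia.
  rewrite ifT //; lia.
rewrite sig1_per //; case: ifP; lia.
Qed.

Lemma sig1_out t : out (sig1 t) = own P1 (om t).
Proof.
have eN := NNE; rewrite /out /=.
case: (t_cases t) => [h | [q [i [hi ->]]]].
  rewrite /sig1; case: ifP => a //.
  rewrite ifT // om_B; last by lia.
  rewrite ifT; last by lia.
  by rewrite (omW h1 h2 h3 hk) //; apply/andP; lia.
rewrite sig1_per // per_om //.
case: (w0_cases hi) => [[a ->]|[a ->]|[a ->]].
- by rewrite ifT ?om_Bab; [rewrite ifF //|..]; lia.
- by rewrite ifT ?om_Bab; [rewrite ifF //|..]; lia.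
- rewrite ifF; last by lia.
  rewrite (_ : B + k - k0 + i = B + (k - k0 + i)); last by lia.
  by rewrite om_B; [rewrite ifT //|]; lia.
Qed.

Lemma sig1_pre t : t <= B + 2 * k -> sig1 t = t.
Proof. by move=> h; rewrite /sig1 h. Qed.

Lemma sig1_fin t : B + 2 * k < t -> t < N -> sig1 t = B + (t - (B + 2 * k) - 1).
Proof. by move=> a b; rewrite /sig1 ifF ?b //; lia. Qed.

Lemma sig1_tr t : tr1 (sig1 t) (other P1 (om t)) = sig1 t.+1.
Proof.
have eN := NNE; rewrite /tr1 /=.
case: (t_cases t) => [h | [q [i [hi ->]]]].
  case: (ltngtP t (B + 2 * k)) => a.
  - rewrite sig1_pre; last by lia.
    rewrite sig1_pre; last by lia.
    rewrite ifF; last by apply/eqP; lia.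
    case: eqP => e //=.
    rewrite e (_ : B + k + k1 + k2 - 1 = B + k + (k1 + k2 - 1)); last by lia.
    rewrite om_Bab ?ifF //; lia.
  - rewrite sig1_fin //.
    rewrite ifF; last by apply/eqP; lia.
    rewrite ifF; last by apply/negbTE; apply/nandP; left; apply/eqP; lia.
    case: (ltnP t.+1 N) => b.
      by rewrite sig1_fin //; lia.
    rewrite (_ : t.+1 = N + 0 * k0 + 0); last by lia.
    rewrite sig1_per ?ifT //; lia.
  - rewrite a sig1_pre // eqxx sig1_fin //; lia.
have sper : forall q' j, j < k0 -> sig1 (N + q' * k0 + j) =
    if j < k1 + k2 then B + k + j else B + k - k0 + j by move=> *; apply: sig1_per.
rewrite per_om //.
case: (w0_cases hi) => [[a ->]|[a ->]|[a ->]] /=.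
- have -> : sig1 (N + q * k0 + i) = B + k + i by rewrite sper ?ifT //; lia.
  have -> : sig1 (N + q * k0 + i).+1 = B + k + i.+1.
    by rewrite per_succ // ifT ?sper ?ifT //; lia.
  rewrite ifF; last by apply/eqP; lia.
  by rewrite ifF; [lia | apply/negbTE; apply/nandP; left; apply/eqP; lia].
- have -> : sig1 (N + q * k0 + i) = B + k + i by rewrite sper ?ifT //; lia.
  rewrite ifF; last by apply/eqP; lia.
  case: (ltnP i.+1 (k1 + k2)) => b.
    have -> : sig1 (N + q * k0 + i).+1 = B + k + i.+1.
      by rewrite per_succ // ifT ?sper ?ifT //; lia.
    by rewrite ifF; [lia | apply/negbTE; apply/nandP; left; apply/eqP; lia].
  have -> : sig1 (N + q * k0 + i).+1 = B + k - k0 + i.+1.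
    by rewrite per_succ // ifT ?sper ?ifF //; lia.
  by rewrite ifT; [lia | apply/andP; split => //; apply/eqP; lia].
- have -> : sig1 (N + q * k0 + i) = B + k - k0 + i by rewrite sper ?ifF //; lia.
  rewrite ifF; last by apply/eqP; lia.
  rewrite ifF; last by apply/negbTE; apply/nandP; left; apply/eqP; lia.
  case: (ltnP i.+1 k0) => b.
    by rewrite per_succ // ifT // sper // ifF //; lia.
  by rewrite per_succ // ifF ?sper ?ifT //; lia.
Qed.

Lemma Bge : 2 * k <= B.
Proof. rewrite /Bk. have : 2 < k by lia. nia. Qed.

Definition sig2 t :=
  if t < N then t
  else if idx t < k1 then B - k1 + idx t
  else if idx t < k1 + k2 then B + (idx t - k1) else N - k0 + idx t.

Definition tr2 q (a : act) :=
  if q == N - 1 then B - k1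
  else if (q == B + k2 - 1) && (a == D) then N - k3 else q.+1.

Lemma sig2_pre t : t < N -> sig2 t = t.
Proof. by move=> h; rewrite /sig2 h. Qed.

Lemma sig2_per q i : i < k0 -> sig2 (N + q * k0 + i) =
  if i < k1 then B - k1 + i else if i < k1 + k2 then B + (i - k1) else N - k0 + i.
Proof. by move=> hi; rewrite /sig2 ifF ?per_idx //; lia. Qed.

Lemma sig2_bound t : sig2 t < (N - 1).+1.
Proof.
have eN := NNE; have bg := Bge.
case: (t_cases t) => [h | [q [i [hi ->]]]]; first by rewrite sig2_pre //; lia.
rewrite sig2_per //; case: ifP => ?; [|case: ifP => ?]; lia.
Qed.

Lemma sig2_out t : out (sig2 t) = own P2 (om t).
Proof.
have eN := NNE; have bg := Bge; rewrite /out /=.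
case: (t_cases t) => [h | [q [i [hi ->]]]].
  by rewrite sig2_pre // (omP h1 h2 h3 hk).
rewrite sig2_per // per_om //.
case: (w0_cases hi) => [[a ->]|[a ->]|[a ->]].
- rewrite a (_ : B - k1 + i = B - 2 * k + (2 * k - k1 + i)); last by lia.
  by rewrite om_B' ?ifF //; lia.
- rewrite ifF; last by lia.
  rewrite ifT; last by lia.
  by rewrite om_B ?ifT //; lia.
- rewrite ifF; last by lia.
  rewrite ifF; last by lia.
  by rewrite (omW h1 h2 h3 hk) //; apply/andP; lia.
Qed.

Lemma sig2_tr t : tr2 (sig2 t) (other P2 (om t)) = sig2 t.+1.
Proof.
have eN := NNE; have bg := Bge; rewrite /tr2 /=.
have sper : forall q' j, j < k0 -> sig2 (N + q' * k0 + j) =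
  if j < k1 then B - k1 + j else if j < k1 + k2 then B + (j - k1) else N - k0 + j.
  by move=> *; apply: sig2_per.
case: (t_cases t) => [h | [q [i [hi ->]]]].
  case: (ltnP t.+1 N) => a.
    rewrite sig2_pre // sig2_pre //.
    rewrite ifF; last by apply/eqP; lia.
    case: eqP => e //=.
    rewrite e (_ : B + k2 - 1 = B + (k2 - 1)); last by lia.
    rewrite om_B; last lia.
    by have -> : (k2 - 1 < k) = true by lia.
  rewrite sig2_pre // ifT; last by apply/eqP; lia.
  rewrite (_ : t.+1 = N + 0 * k0 + 0); last by lia.
  by rewrite sper ?ifT //; lia.
rewrite per_om //.
case: (w0_cases hi) => [[a ->]|[a ->]|[a ->]] /=.
- have -> : sig2 (N + q * k0 + i) = B - k1 + i by rewrite sper ?ifT //.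
  rewrite ifF; last by apply/eqP; lia.
  rewrite ifF; last by apply/negbTE; apply/nandP; left; apply/eqP; lia.
  rewrite per_succ // ifT; last by lia.
  rewrite sper; last by lia.
  case: ifP => b; first by lia.
  by rewrite ifT; lia.
- have -> : sig2 (N + q * k0 + i) = B + (i - k1).
    by rewrite sper // ifF; [rewrite ifT //; lia | lia].
  rewrite ifF; last by apply/eqP; lia.
  case: (ltnP i.+1 (k1 + k2)) => b.
    have -> : sig2 (N + q * k0 + i).+1 = B + (i.+1 - k1).
      rewrite per_succ // ifT; last by lia.
      rewrite sper; last by lia.
      by rewrite ifF; [rewrite ifT //; lia | lia].
    rewrite ifF; last by apply/negbTE; apply/nandP; left; apply/eqP; lia.
    lia.
  have -> : sig2 (N + q * k0 + i).+1 = N - k3.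
    rewrite per_succ // ifT; last by lia.
    rewrite sper; last by lia.
    by rewrite ifF; [rewrite ifF; lia | lia].
  by rewrite ifT //; apply/andP; split => //; apply/eqP; lia.
- have -> : sig2 (N + q * k0 + i) = N - k0 + i.
    by rewrite sper // ifF; [rewrite ifF //; lia | lia].
  case: (ltnP i.+1 k0) => b.
    have -> : sig2 (N + q * k0 + i).+1 = N - k0 + i.+1.
      rewrite per_succ // ifT //.
      rewrite sper; last by lia.
      by rewrite ifF; [rewrite ifF //; lia | lia].
    rewrite ifF; last by apply/eqP; lia.
    by rewrite ifF; [lia | rewrite andbF].
  have -> : sig2 (N + q * k0 + i).+1 = B - k1.
    rewrite per_succ // ifF; last by lia.
    rewrite sper; last by lia.
    by rewrite ifT //; lia.
  by rewrite ifT //; apply/eqP; lia.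
Qed.

End Up.

Theorem lemma1 (k k0 k1 k2 k3 : nat) :
  k0 ^ 2 + k0 <= k ->
  k < k0.+1 ^ 2 + k0.+1 ->
  0 < k1 -> 0 < k2 -> 0 < k3 ->
  k1 + k2 + k3 = k0 ->
  complexity_is P1 (omega_star k k1 k2 k3) (k ^ 3 + 2 * k ^ 2 + 1) /\
  complexity_is P2 (omega_star k k1 k2 k3) (k ^ 3 + 2 * k ^ 2 + k + 1).
Proof.
move=> hA _ h1 h2 h3 hsum.
have hk : k1 + k2 + k3 <= k by rewrite sq in hA; lia.
have kp : 0 < k by lia.
have -> : omega_star k k1 k2 k3 = om k k1 k2 k3.
  apply: functional_extensionality => t; apply: omega_star_om => //; lia.
have eB := BkE h1 h2 h3 hk.
have eN := NNE h1 h2 h3 hk.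
split; split.
- have := @upper P1 (om k k1 k2 k3) (Bk k + 2 * k) (sig1 k k1 k2 k3) (out k k1 k2 k3)
    (tr1 k k1 k2 k3) (@sig1_pre k k1 k2 k3 0 ltac:(lia))
    (sig1_bound h1 h2 h3 hk) (sig1_out h1 h2 h3 hk) (sig1_tr h1 h2 h3 hk).
  by rewrite eB addn1.
- move=> M cM; apply: (lower cM) => s t st tM.
  apply: (gen_sep h1 h2 h3 hk) => //; rewrite /NN; lia.
- have := @upper P2 (om k k1 k2 k3) (NN k - 1) (sig2 k k1 k2 k3) (out k k1 k2 k3)
    (tr2 k k1 k2 k3) (@sig2_pre k k1 k2 k3 0 ltac:(lia))
    (sig2_bound h1 h2 h3 hk) (sig2_out h1 h2 h3 hk) (sig2_tr h1 h2 h3 hk).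
  by rewrite (_ : (NN k - 1).+1 = k ^ 3 + 2 * k ^ 2 + k + 1) //; rewrite /NN; lia.
- move=> M cM; apply: (lower cM) => s t st tM.
  case: (leqP t (NN k - k - 1)) => ht; first exact: (gen_sep h1 h2 h3 hk).
  apply: (p2_sep h1 h2 h3 hk) => //; rewrite /NN in ht *; lia.
Qed.
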